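(* Let $(a,b,c)\in\mathbb{R}^3\setminus\{(0,0,0)\}$, $A_1=(a,b,c)$, $A_2=(-ae^{c},-be^{-c},-c)$, and let $N(x,y,z)=e^{z}(x+ae^{c})(x-a)+e^{-z}(y+be^{-c})(y-b)+4\sinh\frac{z+c}{2}\sinh\frac{z-c}{2}$, so that the translation-like Thaloid of $\overline{A_1A_2}$ together with $A_1,A_2$ is the zero set $\{N=0\}$. Then for no $R>0$ does $\{N=0\}$ coincide with the translation sphere $S^t_O(R)=\Big\{(x,y,z):\big(\tfrac{xz}{1-e^{-z}}\big)^2+\big(\tfrac{yz}{e^{z}-1}\big)^2+z^2=R^2\Big\}$ (where $\tfrac{z}{1-e^{-z}}$ and $\tfrac{z}{e^z-1}$ are interpreted as $1$ at $z=0$) centered at the origin; in particular the Thaloid is never the translation sphere of radius equal to the translation distance from the origin to $A_1$.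
   Context: $\mathbf{Sol}$ is $\mathbb{R}^3$ with coordinates $(x,y,z)$, group law $(a,b,c)(x,y,z)=(x+ae^{-z},\,y+be^{z},\,z+c)$, and left-invariant metric $ds^2=e^{2z}dx^2+e^{-2z}dy^2+dz^2$. The translation curve starting at the origin with initial unit vector $(u,v,w)$ is $t\mapsto\big(-\tfrac{u}{w}(e^{-wt}-1),\tfrac{v}{w}(e^{wt}-1),wt\big)$ if $w\neq0$ and $t\mapsto(ut,vt,0)$ if $w=0$; the translation distance from the origin to a point is the parameter length $t$ of this curve reaching it, and $S^t_O(R)$ is the set of points at translation distance $R$ from the origin. For $P=(p_1,p_2,p_3)$ let $T_P(X,Y,Z)=(p_1+Xe^{-p_3},\,p_2+Ye^{p_3},\,p_3+Z)$; the translation curve from $P$ to $Q$ is the $T_P$-image of the translation curve from the origin to $T_P^{-1}(Q)$. The translation-like Thaloid of $\overline{A_1A_2}$ is the set of points $P\notin\{A_1,A_2\}$ at which the initial tangent vectors of the translation curves from $P$ to $A_1$ and to $A_2$ are orthogonal with respect to the metric at $P$. *)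

(* Defs.v *)
From Stdlib Require Import Reals.
Open Scope R_scope.

Definition thaloidN (a b c x y z : R) : R :=
  exp z * (x + a * exp c) * (x - a) + exp (- z) * (y + b * exp (- c)) * (y - b)
  + 4 * sinh ((z + c) / 2) * sinh ((z - c) / 2).

Definition fsol1 (z : R) : R := if Req_EM_T z 0 then 1 else z / (1 - exp (- z)).
Definition fsol2 (z : R) : R := if Req_EM_T z 0 then 1 else z / (exp z - 1).

Definition in_tsphere (Rad x y z : R) : Prop :=
  (x * fsol1 z) ^ 2 + (y * fsol2 z) ^ 2 + z ^ 2 = Rad ^ 2.

(* translation curve from the origin with initial unit vector (u,v,w) *)
Definition tcurve (u v w t : R) : R * R * R :=
  if Req_EM_T w 0 then (u * t, v * t, 0)
  else (- (u / w) * (exp (- (w * t)) - 1), (v / w) * (exp (w * t) - 1), w * t).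

Definition is_tdist (P : R * R * R) (t : R) : Prop :=
  0 <= t /\ exists u v w, u ^ 2 + v ^ 2 + w ^ 2 = 1 /\ tcurve u v w t = P.

(* Main.v *)
Require Import Defs.
From Stdlib Require Import Reals Lra Psatz.
From Coquelicot Require Import Coquelicot.
Open Scope R_scope.
Lemma pos_of_deriv (f f' : R -> R) :
  (forall x, is_derive f x (f' x)) -> f 0 = 0 ->
  (forall x, 0 < x -> 0 < f' x) -> forall x, 0 < x -> 0 < f x.
Proof.
intros Hd H0 Hp x Hx.
destruct (MVT_cor2 f f' 0 x Hx) as [c [Hc1 Hc2]].
- intros c _. apply is_derive_Reals. apply Hd.
- rewrite H0 in Hc1. assert (0 < f' c) by (apply Hp; lra). nra.
Qed.
Lemma expS (t : R) : 0 < t -> 0 < exp t - exp (- t).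
Proof. intros. assert (exp (-t) < exp t) by (apply exp_increasing; lra). lra. Qed.
Lemma sinh_gt (t : R) : 0 < t -> t < sinh t.
Proof.
intros Ht.
assert (0 < sinh t - t); [|lra].
apply (pos_of_deriv (fun t => sinh t - t) (fun t => (exp t + exp (-t))/2 - 1)); auto.
- intros y. unfold sinh. auto_derive; auto. lra.
- unfold sinh. rewrite Ropp_0, exp_0. lra.
- intros y Hy. assert (1 < exp y). { rewrite <- exp_0. apply exp_increasing; lra. }
  assert (exp y * exp (-y) = 1) by (rewrite <- exp_plus; replace (y + -y) with 0 by ring; apply exp_0).
  nra.
Qed.
Lemma hpos (r : R) : 0 < r -> (2 - r * r) * (exp r + exp (- r)) < 4.
Proof.
intros Hr.
assert (0 < 4 - (2 - r * r) * (exp r + exp (- r))); [|lra].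
apply (pos_of_deriv (fun r => 4 - (2 - r * r) * (exp r + exp (- r)))
   (fun r => 2*r*(exp r + exp(-r)) - (2 - r*r)*(exp r - exp(-r)))); auto.
- intros y. auto_derive; auto. ring.
- rewrite Ropp_0, exp_0. lra.
- apply (pos_of_deriv _ (fun r => r*r*(exp r + exp(-r)) + 4*r*(exp r - exp(-r)))).
  + intros y. auto_derive; auto. ring.
  + rewrite Ropp_0, exp_0. lra.
  + intros y Hy. pose proof (expS y Hy). pose proof (exp_pos y). pose proof (exp_pos (-y)).
    nra.
Qed.
Lemma fs10 : fsol1 0 = 1.
Proof. unfold fsol1; destruct (Req_EM_T 0 0); [reflexivity|congruence]. Qed.
Lemma fs20 : fsol2 0 = 1.
Proof. unfold fsol2; destruct (Req_EM_T 0 0); [reflexivity|congruence]. Qed.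
Lemma sinh0 : sinh 0 = 0.
Proof. unfold sinh; rewrite Ropp_0, exp_0; field. Qed.
Lemma sinhN x : sinh (- x) = - sinh x.
Proof. unfold sinh; rewrite Ropp_involutive; field. Qed.
Lemma sinh2 x : 4 * sinh (x / 2) * sinh (x / 2) = exp x + exp (- x) - 2.
Proof.
unfold sinh.
assert (E1 : exp (x/2) * exp (x/2) = exp x) by (rewrite <- exp_plus; f_equal; field).
assert (E2 : exp (-(x/2)) * exp (-(x/2)) = exp (-x)) by (rewrite <- exp_plus; f_equal; field).
assert (E3 : exp (x/2) * exp (-(x/2)) = 1) by (rewrite <- exp_plus; replace (x/2 + -(x/2)) with 0 by ring; apply exp_0).
nra.
Qed.
Lemma exp1 x : exp x = 1 -> x = 0.
Proof. intros H. rewrite <- (ln_exp x), H. apply ln_1. Qed.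

Lemma part1 (a b c : R) (habc : ~ (a = 0 /\ b = 0 /\ c = 0)) (Rad : R) :
  0 < Rad -> ~ (forall x y z : R, thaloidN a b c x y z = 0 <-> in_tsphere Rad x y z).
Proof.
intros HR H.
assert (HA : in_tsphere Rad a b c).
{ apply H. unfold thaloidN. replace ((c - c)/2) with 0 by field. rewrite sinh0. ring. }
unfold in_tsphere in HA.
assert (Ha : thaloidN a b c (-a) b c = 0).
{ apply H. unfold in_tsphere. rewrite <- HA. ring. }
assert (Hb : thaloidN a b c a (-b) c = 0).
{ apply H. unfold in_tsphere. rewrite <- HA. ring. }
unfold thaloidN in Ha, Hb.
replace ((c - c)/2) with 0 in Ha, Hb by field. rewrite sinh0 in Ha, Hb.
pose proof (exp_pos c) as ec. pose proof (exp_pos (-c)) as enc.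
assert (Ha' : a = 0 \/ exp c = 1).
{ destruct (Req_dec a 0); [now left|right].
  assert (a * a * exp c * (exp c - 1) = 0) by nra.
  assert (a * a * exp c <> 0). { apply Rmult_integral_contrapositive_currified; [|lra].
    apply Rmult_integral_contrapositive_currified; auto. }
  apply Rmult_integral in H1. destruct H1; [contradiction|lra]. }
assert (Hb' : b = 0 \/ exp (-c) = 1).
{ destruct (Req_dec b 0); [now left|right].
  assert (b * b * exp (-c) * (exp (-c) - 1) = 0) by nra.
  assert (b * b * exp (-c) <> 0). { apply Rmult_integral_contrapositive_currified; [|lra].
    apply Rmult_integral_contrapositive_currified; auto. }
  apply Rmult_integral in H1. destruct H1; [contradiction|lra]. }
destruct (Req_dec c 0) as [Hc0|Hc0].
- subst c. rewrite fs10, fs20 in HA.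
  assert (E1 : thaloidN a b 0 0 0 Rad = 0).
  { apply H. unfold in_tsphere. ring. }
  assert (E2 : thaloidN a b 0 0 0 (-Rad) = 0).
  { apply H. unfold in_tsphere. ring. }
  unfold thaloidN in E1, E2.
  replace ((Rad + 0)/2) with (Rad/2) in E1 by field.
  replace ((Rad - 0)/2) with (Rad/2) in E1 by field.
  replace ((-Rad + 0)/2) with ((-Rad)/2) in E2 by field.
  replace ((-Rad - 0)/2) with ((-Rad)/2) in E2 by field.
  rewrite sinh2 in E1, E2. rewrite Ropp_involutive in E2. rewrite ?Ropp_0, ?exp_0 in E1, E2.
  pose proof (hpos Rad HR).
  assert (HA2 : a*a + b*b = Rad*Rad) by (rewrite <- (Rmult_1_r a), <- (Rmult_1_r b); nra).
  assert (HA3 : (a*a + b*b) * (exp Rad + exp (- Rad)) = Rad*Rad * (exp Rad + exp (- Rad))) by (rewrite HA2; ring).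
  assert ((2 - Rad * Rad) * (exp Rad + exp (- Rad)) = 4) by (ring_simplify in E1; ring_simplify in E2; ring_simplify in HA3; lra).
  lra.
- destruct Ha' as [Ha'|Ha']; [|apply exp1 in Ha'; contradiction].
  destruct Hb' as [Hb'|Hb']; [|apply exp1 in Hb'; lra].
  subst a b.
  assert (Hc : thaloidN 0 0 c c 0 0 = 0).
  { apply H. unfold in_tsphere. rewrite fs10, fs20. rewrite <- HA. ring. }
  unfold thaloidN in Hc.
  replace ((0 + c)/2) with (c/2) in Hc by field.
  replace ((0 - c)/2) with (-(c/2)) in Hc by field.
  rewrite sinhN, Ropp_0, exp_0 in Hc.
  destruct (Rlt_or_le 0 c) as [Hp|Hp].
  + pose proof (sinh_gt (c/2) ltac:(lra)). nra.
  + pose proof (sinh_gt (-(c/2)) ltac:(lra)). rewrite sinhN in H0. nra.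
Qed.

Theorem lemma4p2 (a b c : R) (habc : ~ (a = 0 /\ b = 0 /\ c = 0)) :
  (forall Rad : R, 0 < Rad ->
     ~ (forall x y z : R, thaloidN a b c x y z = 0 <-> in_tsphere Rad x y z)) /\
  (forall Rad : R, is_tdist (a, b, c) Rad ->
     ~ (forall x y z : R, thaloidN a b c x y z = 0 <-> in_tsphere Rad x y z)).
Proof.
split.
- apply part1; auto.
- intros Rad [H0 _] H.
  destruct (Rle_lt_or_eq_dec 0 Rad H0) as [Hp|Hz].
  + exact (part1 a b c habc Rad Hp H).
  + subst Rad.
    assert (HA : in_tsphere 0 a b c).
    { apply H. unfold thaloidN. replace ((c - c)/2) with 0 by field. rewrite sinh0. ring. }
    unfold in_tsphere in HA.
    assert (c = 0) by nra. subst c. rewrite fs10, fs20 in HA.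
    apply habc. split; [nra|split;[nra|reflexivity]].
Qed.
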